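(* Let $\mathcal{A}=(A,\le,\otimes,e,\to)$ be a strong algebra whose multiplication has a left residual $\Rightarrow_A$ (i.e. $a\otimes b\le c$ iff $b\le a\Rightarrow_A c$ for all $a,b,c$) and which internalizes its closed monoidal structure, i.e. for all $a,b,c\in A$: \[ a\to b\le (c\otimes a)\to(c\otimes b)\quad\text{and}\quad (a\otimes b)\to c\le b\to(a\Rightarrow_A c). \] Then there exist a non-commutative spacetime $\mathcal{S}=(\mathscr{X},\nabla)$ and a map $i:A\to\mathscr{X}$ which is a strict monoidal order embedding satisfying $i(a\to b)=i(a)\to_{\mathcal{S}}i(b)$ for all $a,b\in A$.
   Context: A monoidal poset is a poset with a monoid structure whose multiplication is monotone in each argument. An implication on it is a function $\to:A^{op}\times A\to A$ (antitone in the first, monotone in the second argument) with $e\le a\to a$ and $(a\to b)\otimes(b\to c)\le a\to c$; a strong algebra is a monoidal poset with an implication. A quantale is a monoidal poset with all joins whose multiplication distributes over arbitrary joins in each argument. A non-commutative spacetime is $(\mathscr{X},\nabla)$ with $\mathscr{X}$ a quantale and $\nabla$ join preserving and oplax monoidal ($\nabla e\le e$, $\nabla(a\otimes b)\le\nabla a\otimes\nabla b$); its implication $\to_{\mathcal{S}}$ is characterized by $a\otimes\nabla b\le c$ iff $b\le a\to_{\mathcal{S}}c$. A strict monoidal order embedding is a map $i$ with $i(e)=e$, $i(a\otimes b)=i(a)\otimes i(b)$ and $a\le b\iff i(a)\le i(b)$. *)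

(* Defs.v *)
Set Implicit Arguments.

Record monoidal_poset (A : Type) (le : A -> A -> Prop) (mul : A -> A -> A) (e : A)
  : Prop := {
  mp_refl : forall a, le a a;
  mp_trans : forall a b c, le a b -> le b c -> le a c;
  mp_antisym : forall a b, le a b -> le b a -> a = b;
  mp_assoc : forall a b c, mul (mul a b) c = mul a (mul b c);
  mp_unitl : forall a, mul e a = a;
  mp_unitr : forall a, mul a e = a;
  mp_monl : forall a a' b, le a a' -> le (mul a b) (mul a' b);
  mp_monr : forall a b b', le b b' -> le (mul a b) (mul a b')
}.

Record is_implication (A : Type) (le : A -> A -> Prop) (mul : A -> A -> A) (e : A)
  (imp : A -> A -> A) : Prop := {
  imp_anti : forall a a' b, le a a' -> le (imp a' b) (imp a b);
  imp_mono : forall a b b', le b b' -> le (imp a b) (imp a b');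
  imp_unit : forall a, le e (imp a a);
  imp_comp : forall a b c, le (mul (imp a b) (imp b c)) (imp a c)
}.

Definition strong_algebra (A : Type) (le : A -> A -> Prop) (mul : A -> A -> A) (e : A)
  (imp : A -> A -> A) : Prop :=
  monoidal_poset le mul e /\ is_implication le mul e imp.

Definition image (X Y : Type) (f : X -> Y) (S : X -> Prop) : Y -> Prop :=
  fun y => exists x, S x /\ y = f x.

Definition is_lub (X : Type) (le : X -> X -> Prop) (S : X -> Prop) (s : X) : Prop :=
  (forall x, S x -> le x s) /\ (forall u, (forall x, S x -> le x u) -> le s u).

Definition is_quantale (X : Type) (le : X -> X -> Prop) (mul : X -> X -> X) (e : X)
  (sup : (X -> Prop) -> X) : Prop :=
  monoidal_poset le mul e /\
  (forall S, is_lub le S (sup S)) /\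
  (forall a S, mul a (sup S) = sup (image (mul a) S)) /\
  (forall a S, mul (sup S) a = sup (image (fun x => mul x a) S)).

Record spacetime : Type := {
  st_X :> Type;
  st_le : st_X -> st_X -> Prop;
  st_mul : st_X -> st_X -> st_X;
  st_e : st_X;
  st_sup : (st_X -> Prop) -> st_X;
  st_nabla : st_X -> st_X;
  st_quantale : is_quantale st_le st_mul st_e st_sup;
  st_nabla_join : forall S, st_nabla (st_sup S) = st_sup (image st_nabla S);
  st_nabla_unit : st_le (st_nabla st_e) st_e;
  st_nabla_mul : forall a b,
      st_le (st_nabla (st_mul a b)) (st_mul (st_nabla a) (st_nabla b))
}.

(* The implication of a spacetime: a ->_S c = sup { b | a (x) nabla b <= c },
   i.e. the map characterized by  a (x) nabla b <= c  iff  b <= a ->_S c. *)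
Definition st_imp (S : spacetime) (a c : S) : S :=
  st_sup S (fun b => st_le S (st_mul S a (st_nabla S b)) c).

Definition strict_monoidal_order_embedding (A : Type) (le : A -> A -> Prop)
  (mul : A -> A -> A) (e : A) (S : spacetime) (i : A -> S) : Prop :=
  i e = st_e S /\
  (forall a b, i (mul a b) = st_mul S (i a) (i b)) /\
  (forall a b, le a b <-> st_le S (i a) (i b)).

(* Main.v *)
Require Import Defs.
From Stdlib Require Import ProofIrrelevance FunctionalExtensionality PropExtensionality.

Definition leP {A} (le : A -> A -> Prop) (U V : A -> Prop) : Prop :=
  forall t, V t -> exists s, U s /\ le s t.
Definition mulP {A} (mul : A -> A -> A) (U V : A -> Prop) : A -> Prop :=
  fun x => exists s t, U s /\ V t /\ x = mul s t.
Definition pr {A} (a : A) : A -> Prop := fun x => x = a.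
Definition Lf {A} (le : A -> A -> Prop) (bx : A -> A) (V : A -> Prop) : A -> Prop :=
  fun x => exists v, V v /\ le v (bx x).

Record DX {A} (le : A -> A -> Prop) := mkDX {
  car : (A -> Prop) -> Prop;
  dc : forall p q, leP le p q -> car q -> car p }.
Arguments car {A le}.
Arguments dc {A le}.

Lemma DX_ext {A} (le : A -> A -> Prop) (Z W : DX le) :
  (forall p, car Z p <-> car W p) -> Z = W.
Proof.
  destruct Z as [z hz], W as [w hw]; simpl; intros H.
  assert (z = w) by (apply functional_extensionality; intro p;
    apply propositional_extensionality; apply H).
  subst w. f_equal. apply proof_irrelevance.
Qed.


Lemma leP_refl {A} (le : A -> A -> Prop) (Hr : forall a, le a a) U : leP le U U.
Proof. intros t Ht; exists t; auto. Qed.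

Lemma leP_trans {A} (le : A -> A -> Prop) (Ht : forall a b c, le a b -> le b c -> le a c)
  U V W : leP le U V -> leP le V W -> leP le U W.
Proof.
  intros H1 H2 t Hw. destruct (H2 t Hw) as [s [Hs Hst]].
  destruct (H1 s Hs) as [u [Hu Hus]]. exists u; split; eauto.
Qed.

Definition supX {A} {le : A -> A -> Prop} (F : DX le -> Prop) : DX le.
Proof.
  refine (@mkDX A le (fun p => exists Z, F Z /\ car Z p) _).
  intros p q Hpq [Z [HZ Hq]]. exists Z; split; auto. exact (dc Z p q Hpq Hq).
Defined.

Definition mulX {A} {le : A -> A -> Prop} (Ht : forall a b c, le a b -> le b c -> le a c)
  (mul : A -> A -> A) (Z W : DX le) : DX le.
Proof.
  refine (@mkDX A le (fun p => exists q r, car Z q /\ car W r /\ leP le p (mulP mul q r)) _).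
  intros p p' Hp [q [r [Hq [Hr H]]]]. exists q, r; repeat split; auto.
  exact (@leP_trans _ _ Ht _ _ _ Hp H).
Defined.

Definition iX {A} {le : A -> A -> Prop} (Ht : forall a b c, le a b -> le b c -> le a c)
  (a : A) : DX le.
Proof.
  refine (@mkDX A le (fun p => leP le p (pr a)) _).
  intros p q H1 H2. exact (@leP_trans _ _ Ht _ _ _ H1 H2).
Defined.

Definition nablaX {A} {le : A -> A -> Prop} (Ht : forall a b c, le a b -> le b c -> le a c)
  (bx : A -> A) (Z : DX le) : DX le.
Proof.
  refine (@mkDX A le (fun p => exists q, car Z q /\ leP le p (Lf le bx q)) _).
  intros p p' Hp [q [Hq H]]. exists q; split; auto. exact (@leP_trans _ _ Ht _ _ _ Hp H).
Defined.

Lemma mulP_mono {A} (le : A -> A -> Prop) mul e (M : monoidal_poset le mul e) q q' r r' :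
  leP le q q' -> leP le r r' -> leP le (mulP mul q r) (mulP mul q' r').
Proof.
  intros H1 H2 t [s' [t' [Hs' [Ht' ->]]]].
  destruct (H1 s' Hs') as [s [Hs Hss]]. destruct (H2 t' Ht') as [u [Hu Huu]].
  exists (mul s u); split. exists s, u; auto.
  eapply (mp_trans M). apply (mp_monl M); eauto. apply (mp_monr M); eauto.
Qed.

Lemma mulP_assoc1 {A} (le : A -> A -> Prop) mul e (M : monoidal_poset le mul e) q r v :
  leP le (mulP mul (mulP mul q r) v) (mulP mul q (mulP mul r v)).
Proof.
  intros t [a [b [Ha [[c [d [Hc [Hd ->]]]] ->]]]].
  exists (mul (mul a c) d); split. exists (mul a c), d; repeat split; auto. exists a, c; auto.
  rewrite (mp_assoc M). apply (mp_refl M).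
Qed.

Lemma mulP_assoc2 {A} (le : A -> A -> Prop) mul e (M : monoidal_poset le mul e) q r v :
  leP le (mulP mul q (mulP mul r v)) (mulP mul (mulP mul q r) v).
Proof.
  intros t [a [b [[c [d [Hc [Hd ->]]]] [Hb ->]]]].
  exists (mul c (mul d b)); split. exists c, (mul d b); repeat split; auto. exists d, b; auto.
  rewrite (mp_assoc M). apply (mp_refl M).
Qed.

Lemma mulP_pr {A} (le : A -> A -> Prop) mul e (M : monoidal_poset le mul e) a b :
  leP le (mulP mul (pr a) (pr b)) (pr (mul a b)) /\ leP le (pr (mul a b)) (mulP mul (pr a) (pr b)).
Proof.
  split.
  - intros t ->. exists (mul a b); split. exists a, b; unfold pr; auto. apply (mp_refl M).
  - intros t [s [u [-> [-> ->]]]]. exists (mul a b); split. reflexivity. apply (mp_refl M).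
Qed.

Lemma mulP_unitl {A} (le : A -> A -> Prop) mul e (M : monoidal_poset le mul e) r :
  leP le (mulP mul (pr e) r) r /\ leP le r (mulP mul (pr e) r).
Proof.
  split.
  - intros t Ht. exists (mul e t); split. exists e, t; unfold pr; auto.
    rewrite (mp_unitl M). apply (mp_refl M).
  - intros t [s [u [-> [Hu ->]]]]. exists u; split; auto. rewrite (mp_unitl M). apply (mp_refl M).
Qed.

Lemma mulP_unitr {A} (le : A -> A -> Prop) mul e (M : monoidal_poset le mul e) r :
  leP le (mulP mul r (pr e)) r /\ leP le r (mulP mul r (pr e)).
Proof.
  split.
  - intros t Ht. exists (mul t e); split. exists t, e; unfold pr; auto.
    rewrite (mp_unitr M). apply (mp_refl M).
  - intros t [s [u [Hs [-> ->]]]]. exists s; split; auto. rewrite (mp_unitr M). apply (mp_refl M).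
Qed.

Lemma Lf_mono {A} (le : A -> A -> Prop) (Ht : forall a b c, le a b -> le b c -> le a c)
  (Hr : forall a, le a a) bx U V : leP le U V -> leP le (Lf le bx U) (Lf le bx V).
Proof.
  intros H t [v [Hv Hvt]]. exists t; split; auto.
  destruct (H v Hv) as [u [Hu Huv]]. exists u; split; eauto.
Qed.

Lemma Lf_oplax {A} (le : A -> A -> Prop) mul e (M : monoidal_poset le mul e) bx
  (Hb : forall x y, le (mul (bx x) (bx y)) (bx (mul x y))) q r :
  leP le (Lf le bx (mulP mul q r)) (mulP mul (Lf le bx q) (Lf le bx r)).
Proof.
  intros t [x [y [[u [Hu Hux]] [[v [Hv Hvy]] ->]]]].
  exists (mul x y); split; [| apply (mp_refl M)].
  exists (mul u v); split. exists u, v; auto.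
  eapply (mp_trans M); [| apply Hb].
  eapply (mp_trans M). apply (mp_monl M); eauto. apply (mp_monr M); eauto.
Qed.

Lemma Lf_unit {A} (le : A -> A -> Prop) (Hr : forall a, le a a) e bx (He : le e (bx e)) :
  leP le (Lf le bx (pr e)) (pr e).
Proof. intros t ->. exists e. split. exists e; split; auto. reflexivity. apply Hr. Qed.

Theorem theorem6p2 (A : Type) (le : A -> A -> Prop) (mul : A -> A -> A) (e : A)
  (imp : A -> A -> A) (limp : A -> A -> A)
  (Hstrong : strong_algebra le mul e imp)
  (Hres : forall a b c, le (mul a b) c <-> le b (limp a c))
  (Hint1 : forall a b c, le (imp a b) (imp (mul c a) (mul c b)))
  (Hint2 : forall a b c, le (imp (mul a b) c) (imp b (limp a c))) :
  exists (S : spacetime) (i : A -> S),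
    strict_monoidal_order_embedding le mul e S i /\
    (forall a b, i (imp a b) = st_imp S (i a) (i b)).
Proof.
  destruct Hstrong as [M I].
  pose proof (mp_trans M) as Ht. pose proof (mp_refl M) as Hr.
  pose proof (@leP_trans A le Ht) as lt.
  pose proof (@leP_refl A le Hr) as lr.
  pose proof (@mulP_mono A le mul e M) as mm.
  set (bx := fun x => imp e x).
  assert (Hb : forall x y, le (mul (bx x) (bx y)) (bx (mul x y))).
  { intros x y; unfold bx. eapply Ht; [apply (mp_monr M) | apply (imp_comp I)].
    pose proof (Hint1 e y x) as H. rewrite (mp_unitr M) in H. exact H. }
  assert (He : le e (bx e)) by apply (imp_unit I).
  assert (Hbox1 : forall a b, le (bx (limp a b)) (imp a b)).
  { intros a b. unfold bx. eapply Ht. apply (Hint1 e (limp a b) a).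
    rewrite (mp_unitr M). apply (imp_mono I). apply Hres. apply Hr. }
  assert (Hbox2 : forall a b, le (imp a b) (bx (limp a b))).
  { intros a b. unfold bx. pose proof (Hint2 a e b) as H. rewrite (mp_unitr M) in H. exact H. }
  set (leX := fun Z W : DX le => forall p, car Z p -> car W p).
  assert (Q : is_quantale leX (mulX Ht mul) (iX Ht e) supX).
  { split; [|split; [|split]].
    - constructor.
      + intros Z p H; exact H.
      + intros Z W V H1 H2 p H; auto.
      + intros Z W H1 H2. apply DX_ext. intro p; split; auto.
      + intros Z W V. apply DX_ext. intro p; simpl; split.
        * intros [q [r [[q1 [r1 [Hq1 [Hr1 Hq]]]] [Hr' Hp]]]].
          exists q1, (mulP mul r1 r). repeat split; auto.
          exists r1, r; repeat split; auto.
          eapply lt. exact Hp. eapply lt. apply mm. exact Hq. apply lr.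
          apply (mulP_assoc1 _ _ _ M).
        * intros [q [r [Hq [[q1 [r1 [Hq1 [Hr1 Hr']]]] Hp]]]].
          exists (mulP mul q q1), r1. repeat split; auto.
          exists q, q1; repeat split; auto.
          eapply lt. exact Hp. eapply lt. apply mm. apply lr. exact Hr'.
          apply (mulP_assoc2 _ _ _ M).
      + intros Z. apply DX_ext. intro p; simpl; split.
        * intros [q [r [Hq [Hr' Hp]]]]. apply (dc Z p r); auto.
          eapply lt. exact Hp. eapply lt. apply mm. exact Hq. apply lr.
          apply (mulP_unitl _ _ _ M).
        * intros Hp. exists (pr e), p. repeat split; auto. apply (mulP_unitl _ _ _ M).
      + intros Z. apply DX_ext. intro p; simpl; split.
        * intros [q [r [Hq [Hr' Hp]]]]. apply (dc Z p q); auto.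
          eapply lt. exact Hp. eapply lt. apply mm. apply lr. exact Hr'.
          apply (mulP_unitr _ _ _ M).
        * intros Hp. exists p, (pr e). repeat split; auto. apply (mulP_unitr _ _ _ M).
      + intros Z Z' W H p [q [r [Hq [Hr' Hp]]]]. exists q, r; auto.
      + intros Z W W' H p [q [r [Hq [Hr' Hp]]]]. exists q, r; auto.
    - intros F. split.
      + intros Z HZ p Hp. exists Z; auto.
      + intros U HU p [Z [HZ Hp]]. exact (HU Z HZ p Hp).
    - intros Z F. apply DX_ext. intro p; simpl; split.
      + intros [q [r [Hq [[W [HW Hr']] Hp]]]]. exists (mulX Ht mul Z W). split.
        exists W; auto. simpl. exists q, r; auto.
      + intros [V [[W [HW ->]] [q [r [Hq [Hr' Hp]]]]]]. exists q, r. repeat split; auto.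
        exists W; auto.
    - intros Z F. apply DX_ext. intro p; simpl; split.
      + intros [q [r [[W [HW Hq]] [Hr' Hp]]]]. exists (mulX Ht mul W Z). split.
        exists W; auto. simpl. exists q, r; auto.
      + intros [V [[W [HW ->]] [q [r [Hq [Hr' Hp]]]]]]. exists q, r. repeat split; auto.
        exists W; auto. }
  pose proof (@Lf_mono A le Ht Hr bx) as Lm.
  assert (NJ : forall F, nablaX Ht bx (supX F) = supX (image (nablaX Ht bx) F)).
  { intros F. apply DX_ext. intro p; simpl; split.
    - intros [q [[Z [HZ Hq]] Hp]]. exists (nablaX Ht bx Z). split.
      exists Z; auto. simpl. exists q; auto.
    - intros [V [[Z [HZ ->]] [q [Hq Hp]]]]. exists q. split; auto. exists Z; auto. }
  assert (NU : leX (nablaX Ht bx (iX Ht e)) (iX Ht e)).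
  { intros p [q [Hq Hp]]. simpl. eapply lt. exact Hp. eapply lt. apply Lm. exact Hq.
    exact (Lf_unit le Hr e bx He). }
  assert (NM : forall Z W, leX (nablaX Ht bx (mulX Ht mul Z W))
                   (mulX Ht mul (nablaX Ht bx Z) (nablaX Ht bx W))).
  { intros Z W p [q [[q1 [r1 [Hq1 [Hr1 Hq]]]] Hp]]. simpl.
    exists (Lf le bx q1), (Lf le bx r1). repeat split.
    - exists q1; split; auto.
    - exists r1; split; auto.
    - eapply lt. exact Hp. eapply lt. apply Lm. exact Hq.
      exact (Lf_oplax le mul e M bx Hb q1 r1). }
  exists (@Build_spacetime (DX le) leX (mulX Ht mul) (iX Ht e) supX (nablaX Ht bx) Q NJ NU NM).
  exists (iX Ht).
  split; [split; [reflexivity | split] | ].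
  - intros a b. apply DX_ext. intro p; simpl; split.
    + intros Hp. exists (pr a), (pr b). repeat split; try apply lr.
      eapply lt. exact Hp. apply (mulP_pr _ _ _ M).
    + intros [q [r [Hq [Hr' Hp]]]]. eapply lt. exact Hp. eapply lt. apply mm. exact Hq. exact Hr'.
      apply (mulP_pr _ _ _ M).
  - intros a b; split.
    + intros H p Hp. simpl in *. eapply lt. exact Hp.
      intros t ->. exists a; split; [reflexivity | exact H].
    + intros H. assert (H' := H (pr a) (lr _)). simpl in H'.
      destruct (H' b eq_refl) as [s [-> Hs]]. exact Hs.
  - intros a b. unfold st_imp. simpl. apply DX_ext. intro p; simpl; split.
    + intros Hp. exists (iX Ht (imp a b)); split; [| exact Hp].
      intros p' [q [r [Hq [[q' [Hq' Hr']] Hp']]]]. simpl.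
      eapply lt. exact Hp'. eapply lt. apply mm. exact Hq. eapply lt. exact Hr'. apply Lm. exact Hq'.
      intros t ->. exists (mul a (limp a b)); split.
      * exists a, (limp a b). split; [reflexivity | split; [| reflexivity]].
        exists (imp a b); split; [reflexivity | apply Hbox2].
      * apply Hres. apply Hr.
    + intros [Z [HZ Hp]].
      assert (Hc : car (mulX Ht mul (iX Ht a) (nablaX Ht bx Z)) (mulP mul (pr a) (Lf le bx p))).
      { simpl. exists (pr a), (Lf le bx p). repeat split; try apply lr. exists p; split; auto. }
      assert (H := HZ _ Hc). simpl in H.
      destruct (H b eq_refl) as [s [[a' [x [-> [[u [Hu Hux]] ->]]]] Hs]].
      intros t ->. exists u; split; auto.
      eapply Ht. exact Hux. eapply Ht; [| apply Hbox1]. unfold bx. apply (imp_mono I).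
      apply Hres. exact Hs.
Qed.
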